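(* If $r \geq 3$ and $t \geq 1$ are integers, then \[ \mathrm{ex}_r\bigl(n, \{C_2, C_3, K_{2,t+1}\}\bigr) \leq \frac{\sqrt{t}}{r(r-1)}\, n^{3/2} + \frac{n}{r}. \]
   Context: Let $G$ be a multigraph and $\mathcal{F}$ a hypergraph. $\mathcal{F}$ is a Berge-$G$ if there is a bijection $f: E(G) \to E(\mathcal{F})$ with $e \subseteq f(e)$ for every $e \in E(G)$. For a family $\mathcal{G}$ of multigraphs, a hypergraph $\mathcal{H}$ is $\mathcal{G}$-free if for every $G \in \mathcal{G}$, $\mathcal{H}$ contains no subhypergraph isomorphic to a Berge-$G$. $\mathrm{ex}_r(n,\mathcal{G})$ denotes the maximum number of edges in an $n$-vertex $r$-uniform $\mathcal{G}$-free hypergraph. $C_2$ is the multigraph consisting of two vertices joined by two parallel edges (so $C_2$-free means linear), $C_3$ is the triangle, and $K_{2,t+1}$ is the complete bipartite graph with parts of sizes $2$ and $t+1$. *)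

(* Defs.v *)
From HB Require Import structures.
From mathcomp Require Import all_boot all_order all_algebra.
Set Implicit Arguments. Unset Strict Implicit. Unset Printing Implicit Defensive.
Import Order.TTheory GRing.Theory Num.Theory.

Definition hypergraph (n : nat) := {set {set 'I_n}}.

Definition uniform (n r : nat) (H : hypergraph n) : Prop :=
  forall e, e \in H -> #|e| = r.

(* A (loopless) multigraph G is given by a finite vertex type V, a finite
   edge type E and an endpoint map ends : E -> V * V (parallel edges allowed). *)

(* H contains a subhypergraph isomorphic to a Berge-G: the vertices of G are
   mapped injectively to vertices of H (phi), and the edges of G are mapped
   injectively (f) to hyperedges of H so that each edge {u,v} of G is contained
   in its image, i.e. {phi u, phi v} \subset f e. *)
Definition contains_berge (n : nat) (H : hypergraph n)
    (V E : finType) (ends : E -> V * V) : Prop :=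
  exists (phi : V -> 'I_n) (f : E -> {set 'I_n}),
    [/\ injective phi, injective f,
        forall e, f e \in H &
        forall e, (phi (ends e).1 \in f e) && (phi (ends e).2 \in f e)].

Definition berge_free (n : nat) (H : hypergraph n)
    (V E : finType) (ends : E -> V * V) : Prop :=
  ~ contains_berge H ends.

Definition C2_ends : 'I_2 -> 'I_2 * 'I_2 := fun _ => (ord0, ord_max).

Definition C3_ends : 'I_3 -> 'I_3 * 'I_3 :=
  fun i => (i, inZp (i.+1)).

Definition K2_ends (s : nat) : 'I_2 * 'I_s -> ('I_2 + 'I_s) * ('I_2 + 'I_s) :=
  fun ab => (inl ab.1, inr ab.2).

(* Main.v *)
Require Import Defs.
From HB Require Import structures.
From mathcomp Require Import all_boot all_order all_algebra.
From mathcomp Require Import zify ring lra.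
Import Order.TTheory GRing.Theory Num.Theory.
Set Implicit Arguments. Unset Strict Implicit.

Lemma lin n (H : hypergraph n) : berge_free H C2_ends ->
  forall e1 e2 a b, e1 \in H -> e2 \in H -> a != b ->
  a \in e1 -> b \in e1 -> a \in e2 -> b \in e2 -> e1 = e2.
Proof.
move=> HC e1 e2 a b H1 H2 ab a1 b1 a2 b2; apply/eqP/negPn/negP => ne; apply: HC.
exists (fun i : 'I_2 => if val i == 0%N then a else b),
       (fun i : 'I_2 => if val i == 0%N then e1 else e2); split.
- move=> [[|[|i]] Hi] [[|[|j]] Hj] //= E; try (by apply: val_inj);
  by rewrite ?E ?eqxx in ab ne *.
- move=> [[|[|i]] Hi] [[|[|j]] Hj] //= E; try (by apply: val_inj);
  by rewrite ?E ?eqxx in ab ne *.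
- by move=> [[|[|i]] Hi].
- by move=> [[|[|i]] Hi] //=; rewrite ?a1 ?b1 ?a2 ?b2.
Qed.

Lemma tri n (H : hypergraph n) : berge_free H C3_ends ->
  forall a b c eab ebc eca, eab \in H -> ebc \in H -> eca \in H ->
  a != b -> b != c -> a != c ->
  a \in eab -> b \in eab -> b \in ebc -> c \in ebc -> c \in eca -> a \in eca ->
  (forall e, e \in H -> a \in e -> b \in e -> c \in e -> False) -> False.
Proof.
move=> HC a b c eab ebc eca Hab Hbc Hca ab bc ac a1 b1 b2 c2 c3 a3 no; apply: HC.
exists (fun i : 'I_3 => if val i == 0%N then a else if val i == 1%N then b else c),
       (fun i : 'I_3 => if val i == 0%N then eab else if val i == 1%N then ebc else eca); split.
- move=> [[|[|[|i]]] Hi] [[|[|[|j]]] Hj] //= E; try (by apply: val_inj);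
  by rewrite ?E ?eqxx // eq_sym ?E ?eqxx in ab bc ac.
- move=> [[|[|[|i]]] Hi] [[|[|[|j]]] Hj] //= E; try (by apply: val_inj); exfalso;
  solve [by apply: (no eab) => //; rewrite E | by apply: (no eab) => //; rewrite -E | by apply: (no ebc) => //; rewrite E | by apply: (no ebc) => //; rewrite -E | by apply: (no eca) => //; rewrite E | by apply: (no eca) => //; rewrite -E].
- by move=> [[|[|[|i]]] Hi].
- by move=> [[|[|[|i]]] Hi] //=; rewrite ?a1 ?b1 ?b2 ?c2 ?c3 ?a3.
Qed.

Definition adj n (H : hypergraph n) (x u : 'I_n) : bool :=
  (u != x) && [exists e in H, (x \in e) && (u \in e)].

Lemma adjP n (H : hypergraph n) x u :
  reflect (u != x /\ exists2 e, e \in H & (x \in e) && (u \in e)) (adj H x u).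
Proof.
rewrite /adj; apply: (iffP andP) => [[-> /existsP [e /andP [He Hxu]]]|[-> [e He Hxu]]].
  by split=> //; exists e.
by split=> //; apply/existsP; exists e; rewrite He.
Qed.

Lemma cod_adj n r (H : hypergraph n) : uniform r H ->
  berge_free H C2_ends -> berge_free H C3_ends ->
  forall u v : 'I_n, u != v -> adj H u v -> (#|[set x | adj H x u && adj H x v]| <= r - 2)%N.
Proof.
move=> Hu H2 H3 u v uv /adjP [_ [h Hh /andP [uh vh]]].
have -> : (r - 2 = #|h :\ u :\ v|)%N.
  have := cardsD1 u h; have := cardsD1 v (h :\ u); rewrite (Hu h Hh) uh !inE vh eq_sym uv /=.
  by move=> A B; rewrite B A !add1n !subSS subn0.
apply: subset_leq_card; apply/subsetP => x; rewrite !inE => /andP [/adjP [xu [e1 He1 /andP [xe1 ue1]]] /adjP [xv [e2 He2 /andP [xe2 ve2]]]].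
have xu' : x != u by rewrite eq_sym.
have xv' : x != v by rewrite eq_sym.
rewrite xu' xv' /=.
apply/negPn/negP => xh.
apply: (tri H3 (a:=u) (b:=v) (c:=x) Hh He2 He1) => //.
move=> e He ue ve xe.
have eh : e = h by apply: (lin H2 He Hh uv).
by rewrite -eh xe in xh.
Qed.

Lemma same_edge_false n (H : hypergraph n) :
  berge_free H C2_ends -> berge_free H C3_ends ->
  forall u v a b e ea eb,
  (forall e, e \in H -> u \in e -> v \in e -> False) ->
  a != b -> v != a -> v != b ->
  e \in H -> u \in e -> a \in e -> b \in e ->
  ea \in H -> v \in ea -> a \in ea -> eb \in H -> v \in eb -> b \in eb -> False.
Proof.
move=> H2 H3 u v a b e ea eb noUV ab va vb He ue ae be Hea vea aea Heb veb beb.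
apply: (tri H3 (a:=v) (b:=a) (c:=b) Hea He Heb) => //.
move=> f Hf vf af bf.
have fe : f = e by apply: (lin H2 Hf He ab).
by apply: (noUV e) => //; rewrite -fe.
Qed.

Lemma cod_nadj n t (H : hypergraph n) :
  berge_free H C2_ends -> berge_free H C3_ends -> berge_free H (@K2_ends t.+1) ->
  forall u v : 'I_n, u != v -> ~~ adj H u v -> (#|[set x | adj H x u && adj H x v]| <= t)%N.
Proof.
move=> H2 H3 HK u v uv nuv.
have noUV : forall e, e \in H -> u \in e -> v \in e -> False.
  move=> e He ue ve; move/negP: nuv; apply; apply/adjP; split; first by rewrite eq_sym.
  by exists e; rewrite ?ue ?ve.
set A := [set x | adj H x u && adj H x v].
rewrite leqNgt; apply/negP => Hlt.
pose w (i : 'I_t.+1) := enum_val (widen_ord Hlt i).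
have wA i : adj H (w i) u && adj H (w i) v by have := enum_valP (widen_ord Hlt i); rewrite inE.
have winj : injective w.
  by move=> i j /enum_val_inj /(congr1 val) /= ij; apply: val_inj.
have [e1 He1] : exists e1 : 'I_t.+1 -> {set 'I_n}, forall i, (e1 i \in H) && (w i \in e1 i) && (u \in e1 i).
  apply: (@fin_all_exists _ (fun _ => {set 'I_n}) (fun i e => (e \in H) && (w i \in e) && (u \in e))) => i.
  have /andP [/adjP [_ [e He /andP [a b]]] _] := wA i.
  by exists e; rewrite He a b.
have [e2 He2] : exists e2 : 'I_t.+1 -> {set 'I_n}, forall i, (e2 i \in H) && (w i \in e2 i) && (v \in e2 i).
  apply: (@fin_all_exists _ (fun _ => {set 'I_n}) (fun i e => (e \in H) && (w i \in e) && (v \in e))) => i.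
  have /andP [_ /adjP [_ [e He /andP [a b]]]] := wA i.
  by exists e; rewrite He a b.
have wu i : u != w i by have /andP [/adjP [] ] := wA i.
have wv i : v != w i by have /andP [_ /adjP [] ] := wA i.
have wne i j : i != j -> w i != w j by apply: contra => /eqP /winj ->.
have E1 i j : e1 i = e1 j -> i = j.
  move=> E; apply/eqP/negPn/negP => ij.
  have /andP [/andP [Hi wi ui]] := He1 i; have /andP [/andP [Hj wj uj]] := He1 j.
  have /andP [/andP [Hi' wi' vi']] := He2 i; have /andP [/andP [Hj' wj' vj']] := He2 j.
  apply: (same_edge_false H2 H3 (u:=u) (v:=v) (a:=w i) (b:=w j) (e:=e1 i) (ea:=e2 i) (eb:=e2 j)) => //.
  - exact: wne.
  - by rewrite E.
have E2 i j : e2 i = e2 j -> i = j.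
  move=> E; apply/eqP/negPn/negP => ij.
  have /andP [/andP [Hi wi ui]] := He1 i; have /andP [/andP [Hj wj uj]] := He1 j.
  have /andP [/andP [Hi' wi' vi']] := He2 i; have /andP [/andP [Hj' wj' vj']] := He2 j.
  apply: (same_edge_false H2 H3 (u:=v) (v:=u) (a:=w i) (b:=w j) (e:=e2 i) (ea:=e1 i) (eb:=e1 j)) => //.
  - by move=> e He ve ue; apply: (noUV e).
  - exact: wne.
  - by rewrite E.
have E12 i j : e1 i = e2 j -> False.
  move=> E; have /andP [/andP [Hi wi ui]] := He1 i; have /andP [/andP [Hj' wj' vj']] := He2 j.
  by apply: (noUV (e1 i)) => //; rewrite E.
apply: HK.
exists (fun z => match z with inl a => if val a == 0%N then u else v | inr i => w i end),
       (fun p : 'I_2 * 'I_t.+1 => if val p.1 == 0%N then e1 p.2 else e2 p.2); split.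
- move=> [[[|[|a]] Ha]|i] [[[|[|b]] Hb]|j] //= E;
  solve [ by congr inl; apply: val_inj | by rewrite (winj _ _ E)
        | by rewrite E eqxx in uv | by rewrite -E eqxx in uv
        | by have := wu j; rewrite E eqxx | by have := wv j; rewrite E eqxx
        | by have := wu i; rewrite -E eqxx | by have := wv i; rewrite -E eqxx ].
- move=> [[[|[|a]] Ha] i] [[[|[|b]] Hb] j] //= E.
  + by rewrite (E1 _ _ E); congr pair; apply: val_inj.
  + by case: (E12 _ _ E).
  + by case: (E12 _ _ (esym E)).
  + by rewrite (E2 _ _ E); congr pair; apply: val_inj.
- move=> [[[|[|a]] Ha] i] //=.
  + by have /andP [/andP [->]] := He1 i.
  + by have /andP [/andP [->]] := He2 i.
- move=> [[[|[|a]] Ha] i] //=.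
  + by have /andP [/andP [_ -> ->]] := He1 i.
  + by have /andP [/andP [_ -> ->]] := He2 i.
Qed.

Lemma card_sum (T : finType) (P : pred T) : #|[set x | P x]| = (\sum_x P x)%N.
Proof. by rewrite -sum1dep_card big_mkcond; apply: eq_bigr => x _; case: (P x). Qed.

Definition N n (H : hypergraph n) x := [set u | adj H x u].

Lemma dd1 n (H : hypergraph n) x :
  (#|N H x| * (#|N H x| - 1) = \sum_u \sum_v (adj H x u && adj H x v && (v != u)))%N.
Proof.
transitivity (\sum_(u in N H x) #|N H x :\ u|)%N.
  rewrite -sum_nat_const; apply: eq_bigr => u uN.
  by rewrite (cardsD1 u (N H x)) uN add1n subn1.
rewrite big_mkcond; apply: eq_bigr => u _.
rewrite [in LHS]inE; case: (adj H x u) => /=; last by rewrite big1.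
rewrite -card_sum; apply: eq_card => v; by rewrite !inE andbC.
Qed.

Lemma count_main n r t (H : hypergraph n) : uniform r H ->
  berge_free H C2_ends -> berge_free H C3_ends -> berge_free H (@K2_ends t.+1) ->
  (\sum_x #|N H x| * (#|N H x| - 1) <= \sum_u ((r - 2) * #|N H u| + t * (n - #|N H u|)))%N.
Proof.
move=> Hu H2 H3 HK.
under eq_bigr => x _ do rewrite dd1.
rewrite exchange_big /=.
apply: leq_sum => u _.
rewrite exchange_big /=.
have -> : (\sum_v \sum_x (adj H x u && adj H x v && (v != u)) =
           \sum_v (v != u) * #|[set x | adj H x u && adj H x v]|)%N.
  apply: eq_bigr => v _; rewrite card_sum big_distrr /=; apply: eq_bigr => x _.
  by case: (v != u); rewrite ?andbT ?andbF ?mul1n.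
apply: (@leq_trans (\sum_v ((r - 2) * (adj H u v) + t * ((v != u) && ~~ adj H u v)))%N).
  apply: leq_sum => v _.
  case: eqP => [->|/eqP vu] /=; first by rewrite mul0n.
  rewrite mul1n; case A: (adj H u v) => /=.
    by rewrite muln1 muln0 addn0; apply: (cod_adj Hu H2 H3); rewrite // eq_sym.
  by rewrite muln1 muln0 add0n; apply: (cod_nadj H2 H3 HK); rewrite ?A // eq_sym.
rewrite big_split /= -!big_distrr /= -!card_sum.
rewrite leq_add2l leq_mul2l; apply/orP; right.
rewrite leq_subRL; last first.
  by rewrite -[X in (_ <= X)%N](card_ord n); apply: max_card.
rewrite /N -cardsUI.
set A := [set x | adj H u x]; set B := [set v | (v != u) && ~~ adj H u v].
have -> : A :&: B = set0.
  by apply/setP => v; rewrite !inE; case: (adj H u v); rewrite ?andbF.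
by rewrite cards0 addn0 -[X in (_ <= X)%N](card_ord n); apply: max_card.
Qed.

Lemma pairs_count n (A : {set 'I_n}) :
  (#|A| * (#|A| - 1) = \sum_x \sum_u ((x \in A) && (u \in A) && (u != x)))%N.
Proof.
transitivity (\sum_(x in A) #|A :\ x|)%N.
  rewrite -sum_nat_const; apply: eq_bigr => u uN.
  by rewrite (cardsD1 u A) uN add1n subn1.
rewrite big_mkcond; apply: eq_bigr => u _.
case: (u \in A) => /=; last by rewrite big1.
rewrite -card_sum; apply: eq_card => v; by rewrite !inE andbC.
Qed.

Lemma lower n r (H : hypergraph n) : uniform r H -> berge_free H C2_ends ->
  (#|H| * (r * (r - 1)) <= \sum_x #|N H x|)%N.
Proof.
move=> Hu H2.
apply: (@leq_trans (\sum_x \sum_u \sum_e ((e \in H) && (x \in e) && (u \in e) && (u != x)))%N).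
  under [X in (_ <= X)%N]eq_bigr => x _ do rewrite exchange_big.
  rewrite exchange_big /= [X in (_ <= X)%N](eq_bigr (fun e => (e \in H) * (#|e| * (#|e| - 1)))%N).
    rewrite -sum_nat_const big_mkcond /=; apply: leq_sum => e _.
    by case E: (e \in H) => //=; rewrite mul1n (Hu e E).
  move=> e _.
  case E: (e \in H) => /=; last by rewrite big1 // => x _; rewrite big1.
  rewrite mul1n pairs_count; apply: eq_bigr => x _; apply: eq_bigr => u _.
  by [].
apply: leq_sum => x _; rewrite card_sum; apply: leq_sum => u _.
rewrite -card_sum.
case: (boolP (adj H x u)) => [_|nadj].
  apply/card_le1_eqP => e1 e2; rewrite !inE => /andP [/andP [/andP [He1 x1] u1] ux] /andP [/andP [/andP [He2 x2] u2] _].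
  by symmetry; apply: (lin H2 He1 He2 (a:=x) (b:=u)); rewrite // eq_sym.
rewrite leqn0 cards_eq0; apply/eqP/setP => e; rewrite !inE.
apply/negP => /andP [/andP [/andP [He xe] ue] ux]; move/negP: nadj; apply; apply/adjP; split=> //.
by exists e; rewrite ?xe ?ue.
Qed.

Local Open Scope ring_scope.

Lemma cs n (R : realFieldType) (F : 'I_n -> R) :
  (\sum_i F i) ^+ 2 <= n%:R * \sum_i F i ^+ 2.
Proof.
set S := \sum_i F i; set Q := \sum_i F i ^+ 2.
have H0 : 0 <= \sum_i \sum_j (F i - F j) ^+ 2.
  by apply: sumr_ge0 => i _; apply: sumr_ge0 => j _; exact: sqr_ge0.
have E1 i : \sum_j (F i - F j) ^+ 2 = n%:R * F i ^+ 2 - F i * S *+ 2 + Q.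
  under eq_bigr => j _ do rewrite sqrrB.
  rewrite big_split big_split /= sumrN sumr_const card_ord mulr_natl.
  by rewrite sumrMnl -mulr_sumr.
rewrite (eq_bigr _ (fun i _ => E1 i)) in H0.
rewrite big_split big_split /= sumrN sumr_const card_ord sumrMnl -mulr_sumr -mulr_suml in H0.
rewrite -/S -/Q in H0.
rewrite -mulr_natr mulr2n -[Q *+ n]mulr_natr in H0; nra.
Qed.

Unset Implicit Arguments. Set Strict Implicit.

Theorem theorem2p1 (R : rcfType) (r t n : nat) :
  (3 <= r)%N -> (1 <= t)%N ->
  forall H : hypergraph n,
    uniform r H ->
    berge_free H C2_ends -> berge_free H C3_ends -> berge_free H (@K2_ends t.+1) ->
    (#|H|%:R : R) <=
      Num.sqrt (t%:R) / (r%:R * (r%:R - 1)) * (n%:R * Num.sqrt (n%:R))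
      + n%:R / r%:R.
Proof.
move=> r3 t1 H Hu H2 H3 HK.
have L := lower Hu H2.
have C := count_main Hu H2 H3 HK.
pose D x : R := (#|N H x|)%:R.
set S := \sum_x D x; set Q := \sum_x D x ^+ 2.
have dn x : (#|N H x| <= n)%N by rewrite -[X in (_ <= X)%N](card_ord n); apply: max_card.
have C' : Q - S <= (r%:R - 2) * S + t%:R * (n%:R * n%:R - S).
  have := C; rewrite -(ler_nat R) !natr_sum => C2.
  have e1 : \sum_x ((#|N H x| * (#|N H x| - 1))%:R : R) = Q - S.
    rewrite /Q /S -sumrB; apply: eq_bigr => x _; rewrite /D.
    case: #|N H x| => [|k]; first by rewrite mul0n expr0n /= subr0.
    by rewrite subn1 /= natrM -addn1 natrD; ring.
  have e2 : \sum_x (((r - 2) * #|N H x| + t * (n - #|N H x|))%:R : R) =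
            (r%:R - 2) * S + t%:R * (n%:R * n%:R - S).
    rewrite (eq_bigr (fun x => (r%:R - 2) * D x + (t%:R * n%:R - t%:R * D x))); last first.
      have r2 : (2 <= r)%N by apply: leq_trans r3.
      move=> x _; rewrite natrD !natrM (natrB _ r2) (natrB _ (dn x)).
      by rewrite /D; ring.
    rewrite big_split /= sumrB sumr_const card_ord -mulr_sumr -mulr_sumr -/S.
    by rewrite -mulr_natr; ring.
  by rewrite -e1 -e2.
have CS : S ^+ 2 <= n%:R * Q by apply: cs.
have S0 : 0 <= S by apply: sumr_ge0 => x _; apply: ler0n.
have LR : (#|H|%:R : R) * (r%:R * (r%:R - 1)) <= S.
  have := L; rewrite -(ler_nat R) natr_sum natrM natrM natrB; last by apply: leq_trans r3.
  by [].
have r1 : (1 < r%:R :> R) by rewrite ltr1n; apply: leq_trans r3.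
have kpos : 0 < r%:R * (r%:R - 1) :> R by apply: mulr_gt0; lra.
set st := Num.sqrt (t%:R : R); set sn := Num.sqrt (n%:R : R).
have st0 : 0 <= st by apply: sqrtr_ge0.
have sn0 : 0 <= sn by apply: sqrtr_ge0.
have hst : st * st = t%:R by rewrite -expr2 sqr_sqrtr // ler0n.
have hsn : sn * sn = n%:R by rewrite -expr2 sqr_sqrtr // ler0n.
set A := st * n%:R * sn.
have A0 : 0 <= A by rewrite /A; apply: mulr_ge0 => //; apply: mulr_ge0 => //; apply: ler0n.
have A2 : A * A = t%:R * (n%:R * n%:R * n%:R).
  rewrite /A; transitivity ((st * st) * (n%:R * n%:R) * (sn * sn)); first by ring.
  by rewrite hst hsn; ring.
set B := n%:R * (r%:R - 1) : R.
have B0 : 0 <= B by rewrite /B; apply: mulr_ge0; [apply: ler0n | lra].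
have t0 : 0 <= t%:R :> R by apply: ler0n.
have n0 : 0 <= n%:R :> R by apply: ler0n.
have Q2 : S ^+ 2 <= B * S + A * A.
  rewrite A2 /B; apply: (le_trans CS).
  have tS : 0 <= t%:R * S by apply: mulr_ge0.
  have : n%:R * Q <= n%:R * ((r%:R - 1) * S + t%:R * (n%:R * n%:R))
    by apply: ler_wpM2l => //; nra.
  move=> h; apply: (le_trans h); rewrite le_eqVlt; apply/orP; left; apply/eqP; ring.
have key : S <= A + B.
  rewrite leNgt; apply/negP => h.
  have h1 : 0 < S - A - B by lra.
  have h2 : 0 < S + A by lra.
  have := mulr_gt0 h1 h2; have := mulr_ge0 A0 B0; nra.
have -> : st / (r%:R * (r%:R - 1)) * (n%:R * sn) + n%:R / r%:R = (A + B) / (r%:R * (r%:R - 1)).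
  rewrite /A /B; field; apply/andP; split; lra.
rewrite ler_pdivlMr //; lra.
Qed.
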